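(* Let $d\ge1$, let $\mu_0:\mathbb{Z}^d\to[0,\infty)$ have finite support, and let $x_1,x_2,\ldots\in\mathbb{Z}^d$ be a sequence in which every $x\in\mathbb{Z}^d$ appears infinitely often. Define $\mu_k=T_{x_k}\cdots T_{x_1}\mu_0$ and $u_k(y)=\sum_{j\le k:\,x_j=y}\max(\mu_{j-1}(y)-1,0)$ (the total mass emitted from $y$ during the first $k$ topplings). Then as $k\to\infty$, $u_k\uparrow u$ pointwise for some finite function $u$, and $\mu_k\to\mu$ pointwise, where \[ \mu=\mu_0+\Delta u\le 1. \]
   Context: For a mass distribution $\mu:\mathbb{Z}^d\to[0,\infty)$ and $x\in\mathbb{Z}^d$, the toppling operator is $T_x\mu=\mu+\alpha\,\Delta\delta_x$ with $\alpha=\max(\mu(x)-1,0)$: if $\mu(x)>1$ the excess $\mu(x)-1$ is split equally among the $2d$ lattice neighbors of $x$ and $x$ keeps mass $1$. $\Delta f(x)=\frac1{2d}\sum_{y\sim x}f(y)-f(x)$ is the discrete Laplacian and $\delta_x$ the indicator of $\{x\}$. *)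

(* Defs.v *)
From Stdlib Require Import Reals.
From mathcomp Require Import all_boot all_algebra.
Set Implicit Arguments. Unset Strict Implicit. Unset Printing Implicit Defensive.

Definition pt (d : nat) := {ffun 'I_d -> int}.

Definition shift (d : nat) (x : pt d) (i : 'I_d) (s : int) : pt d :=
  [ffun j => if j == i then (x j + s)%R else x j].

Definition lap (d : nat) (f : pt d -> R) (x : pt d) : R :=
  Rminus (Rmult (Rinv (INR (2 * d)))
     (\big[Rplus/R0]_(i < d) Rplus (f (shift x i 1%R)) (f (shift x i (-1)%R))))
    (f x).

Definition delta (d : nat) (x : pt d) : pt d -> R :=
  fun y => if y == x then R1 else R0.

Definition alpha (d : nat) (mu : pt d -> R) (x : pt d) : R := Rmax (Rminus (mu x) R1) R0.

Definition topple (d : nat) (x : pt d) (mu : pt d -> R) : pt d -> R :=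
  fun y => Rplus (mu y) (Rmult (alpha mu x) (lap (delta x) y)).

(* The toppling sequence x_1, x_2, ... is given as xs : nat -> pt d with
   x_{k+1} = xs k.  mu_seq k = mu_k = T_{x_k} ... T_{x_1} mu_0. *)
Fixpoint mu_seq (d : nat) (mu0 : pt d -> R) (xs : nat -> pt d) (k : nat)
  : pt d -> R :=
  match k with
  | O => mu0
  | S k' => topple (xs k') (mu_seq mu0 xs k')
  end.

Fixpoint u_seq (d : nat) (mu0 : pt d -> R) (xs : nat -> pt d) (k : nat)
  : pt d -> R :=
  match k with
  | O => fun _ => R0
  | S k' => fun y => Rplus (u_seq mu0 xs k' y)
                      (if y == xs k' then alpha (mu_seq mu0 xs k') y else R0)
  end.

(* Main.v *)
Require Import Defs.
From Stdlib Require Import Reals Lra.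
From HB Require Import structures.
From mathcomp Require Import all_boot all_algebra.
Set Implicit Arguments. Unset Strict Implicit. Unset Printing Implicit Defensive.
Open Scope R_scope.
Definition zR (a : int) : R := match a with Posz n => INR n | Negz n => - INR n.+1 end.
Lemma zR_opp_nat n : zR (- (n%:Z))%R = - INR n.
Proof. case: n => [|n]; first by rewrite /= Ropp_0. by []. Qed.
Lemma zR_add1 a : zR (a + 1)%R = zR a + 1.
Proof.
case: a => n.
  rewrite -PoszD addn1; exact: S_INR.
have -> : (Negz n + 1 = - n%:Z)%R.
  by rewrite NegzE -addn1 PoszD GRing.opprD GRing.addrNK.
rewrite zR_opp_nat.
change (zR (Negz n)) with (- INR n.+1). rewrite S_INR. lra.
Qed.
Lemma zR_sub1 a : zR (a + (-1))%R = zR a - 1.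
Proof.
have := zR_add1 (a + (-1))%R. rewrite GRing.addrNK. lra.
Qed.
Lemma zR_sq a : zR a * zR a = INR `|a|%N * INR `|a|%N.
Proof. case: a => n; first done.
have -> : `|Negz n|%N = n.+1 by []. change (zR (Negz n)) with (- INR n.+1). ring. Qed.
Lemma shiftE d (x : pt d) i s j : shift x i s j = if j == i then (x j + s)%R else x j.
Proof. by rewrite /shift ffunE. Qed.
Lemma shiftK d (x : pt d) i s : shift (shift x i s) i (- s)%R = x.
Proof. apply/ffunP => j; rewrite !shiftE; case: eqP => // ->; by rewrite GRing.addrK. Qed.
Lemma shift_eq d (z x : pt d) i s : (shift z i s == x) = (z == shift x i (- s)%R).
Proof.
apply/eqP/eqP => [<-|->]; first by rewrite shiftK.
by have := shiftK x i (- s)%R; rewrite GRing.opprK.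
Qed.
Lemma shift_ne d (x : pt d) i s : s != 0%R -> shift x i s != x.
Proof.
move=> hs; apply/eqP => /ffunP /(_ i); rewrite shiftE eqxx => /eqP.
by rewrite -{2}(GRing.addr0 (x i)) (inj_eq (GRing.addrI _)) (negbTE hs).
Qed.
Lemma RplusA' : associative Rplus. Proof. by move=> x y z; rewrite Rplus_assoc. Qed.
HB.instance Definition _ := Monoid.isComLaw.Build R R0 Rplus RplusA' Rplus_comm Rplus_0_l.

Notation "\rsum_ ( i <- r ) F" := (\big[Rplus/R0]_(i <- r) F)
  (at level 36, F at level 36, i, r at level 50).

Lemma sumRM (I : Type) (r : seq I) (F : I -> R) c :
  \rsum_(i <- r) (c * F i) = c * \rsum_(i <- r) F i.
Proof. elim: r => [|a r IH]; rewrite ?big_nil ?big_cons; [ring | rewrite IH; ring]. Qed.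
Lemma sumRMr (I : Type) (r : seq I) (F : I -> R) c :
  \rsum_(i <- r) (F i * c) = (\rsum_(i <- r) F i) * c.
Proof. elim: r => [|a r IH]; rewrite ?big_nil ?big_cons; [ring | rewrite IH; ring]. Qed.
Lemma sumRD (I : Type) (r : seq I) (F G : I -> R) :
  \rsum_(i <- r) (F i + G i) = \rsum_(i <- r) F i + \rsum_(i <- r) G i.
Proof. elim: r => [|a r IH]; rewrite ?big_nil ?big_cons; [ring | rewrite IH; ring]. Qed.
Lemma sumRB (I : Type) (r : seq I) (F G : I -> R) :
  \rsum_(i <- r) (F i - G i) = \rsum_(i <- r) F i - \rsum_(i <- r) G i.
Proof. elim: r => [|a r IH]; rewrite ?big_nil ?big_cons; [ring | rewrite IH; ring]. Qed.
Lemma sumR_le (I : Type) (r : seq I) (F G : I -> R) :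
  (forall i, F i <= G i) -> \rsum_(i <- r) F i <= \rsum_(i <- r) G i.
Proof. move=> h; elim: r => [|a r IH]; rewrite ?big_nil ?big_cons; [lra | have := h a; lra]. Qed.
Lemma sumR_ge0 (I : Type) (r : seq I) (F : I -> R) :
  (forall i, 0 <= F i) -> 0 <= \rsum_(i <- r) F i.
Proof. move=> h; elim: r => [|a r IH]; rewrite ?big_nil ?big_cons; [lra | have := h a; lra]. Qed.
Lemma sumR_const (I : Type) (r : seq I) c :
  \rsum_(i <- r) c = INR (size r) * c.
Proof. elim: r => [|a r IH]; rewrite ?big_nil ?big_cons; first by rewrite /=; ring.
rewrite IH; change (size (a :: r)) with (size r).+1; rewrite S_INR; ring. Qed.
Lemma sumR_ext (I : Type) (r : seq I) (F G : I -> R) :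
  (forall i, F i = G i) -> \rsum_(i <- r) F i = \rsum_(i <- r) G i.
Proof. by move=> h; apply: eq_bigr => i _. Qed.

Lemma sum_delta d (T : seq (pt d)) a (g : pt d -> R) :
  uniq T -> a \in T -> \rsum_(z <- T) (delta a z * g z) = g a.
Proof.
move=> uT aT; rewrite (bigD1_seq a) //= /delta eqxx big1 => [|z /negbTE ->]; ring.
Qed.
Lemma delta_shift d (x z : pt d) i s : delta x (shift z i s) = delta (shift x i (-s)%R) z.
Proof. by rewrite /delta shift_eq. Qed.

Lemma sum_lapdelta d (T : seq (pt d)) x g : uniq T -> x \in T ->
  (forall i, shift x i 1%R \in T) -> (forall i, shift x i (-1)%R \in T) ->
  \rsum_(z <- T) (lap (delta x) z * g z) = lap g x.
Proof.
move=> uT xT h1 h2; rewrite /lap.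
transitivity (/ INR (2*d) * \rsum_(z <- T) (\big[Rplus/R0]_(i < d)
   (delta x (shift z i 1%R) * g z + delta x (shift z i (-1)%R) * g z))
   - \rsum_(z <- T) (delta x z * g z)).
  under eq_bigr => z _ do rewrite Rmult_minus_distr_r Rmult_assoc.
  rewrite sumRB sumRM; congr (_ * _ - _); apply: sumR_ext => z.
  by rewrite -sumRMr; apply: sumR_ext => i; ring.
rewrite (sum_delta _ uT xT) exchange_big /=.
congr (_ * _ - _); apply: eq_bigr => i _.
rewrite sumRD; under eq_bigr => z _ do rewrite delta_shift.
under [X in _ + X = _]eq_bigr => z _ do rewrite delta_shift.
rewrite !sum_delta // GRing.opprK; apply: Rplus_comm.
Qed.
Lemma lap_ext d (f g : pt d -> R) x : (forall z, f z = g z) -> lap f x = lap g x.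
Proof. move=> h; rewrite /lap h; congr (_ * _ - _); apply: eq_bigr => i _; rewrite !h. done. Qed.

Lemma lap_lin d (f h : pt d -> R) c x :
  lap (fun z => f z + c * h z) x = lap f x + c * lap h x.
Proof.
rewrite /lap.
have -> : \big[Rplus/R0]_(i < d) (f (shift x i 1%R) + c * h (shift x i 1%R) +
     (f (shift x i (-1)%R) + c * h (shift x i (-1)%R))) =
   \big[Rplus/R0]_(i < d) (f (shift x i 1%R) + f (shift x i (-1)%R)) +
   c * \big[Rplus/R0]_(i < d) (h (shift x i 1%R) + h (shift x i (-1)%R)).
  rewrite -sumRM -sumRD; apply: sumR_ext => i; ring.
ring.
Qed.

Lemma iter_plus n c : iter n (Rplus c) R0 = INR n * c.
Proof. elim: n => [|n IH] /=; first ring. rewrite IH; case: n {IH} => [|n] /=; ring. Qed.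

Lemma INR2d d : INR (2 * d) = 2 * INR d.
Proof. by rewrite -multE mult_INR. Qed.

Lemma lap_const d (c : R) x : (0 < d)%N -> lap (fun _ : pt d => c) x = 0.
Proof.
move=> hd; rewrite /lap big_const_ord iter_plus INR2d.
have : INR d <> 0 by apply: not_0_INR; move=> e; rewrite e in hd.
move=> h; field; exact: h.
Qed.
Definition Q d (z : pt d) : R := \big[Rplus/R0]_(i < d) (zR (z i) * zR (z i)).

Lemma sum_ind d (i : 'I_d) (D : R) : \big[Rplus/R0]_(j < d) (if j == i then D else 0) = D.
Proof. by rewrite -big_mkcond /= big_pred1_eq. Qed.

Lemma Q_shift d (x : pt d) i s :
  Q (shift x i s) = Q x + (zR (x i + s)%R * zR (x i + s)%R - zR (x i) * zR (x i)).
Proof.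
rewrite /Q -(sum_ind i (zR (x i + s)%R * zR (x i + s)%R - zR (x i) * zR (x i))) -sumRD.
apply: sumR_ext => j; rewrite shiftE; case: eqP => [->|_]; ring.
Qed.

Lemma lap_Q d x : (0 < d)%N -> lap (@Q d) x = 1.
Proof.
move=> hd; rewrite /lap.
under eq_bigr => i _ do rewrite !Q_shift zR_add1 zR_sub1.
have -> : \big[Rplus/R0]_(i < d) (Q x + ((zR (x i) + 1) * (zR (x i) + 1) - zR (x i) * zR (x i)) +
    (Q x + ((zR (x i) - 1) * (zR (x i) - 1) - zR (x i) * zR (x i)))) =
    \big[Rplus/R0]_(i < d) (2 * Q x + 2).
  by apply: sumR_ext => i; ring.
rewrite big_const_ord iter_plus INR2d.
have : INR d <> 0 by apply: not_0_INR; move=> e; rewrite e in hd.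
move=> h; field; exact: h.
Qed.
Ltac rl := change R0 with 0 in *; change R1 with 1 in *; lra.

Lemma alpha_ge0 d (mu : pt d -> R) x : 0 <= alpha mu x.
Proof. rewrite /alpha; apply: Rmax_r. Qed.

Lemma Rinv2d_ge0 d : 0 <= / INR (2 * d).
Proof.
case: d => [|d]; first by rewrite muln0 /= Rinv_0; lra.
apply: Rlt_le; apply: Rinv_0_lt_compat; apply: lt_0_INR; apply/ltP; by rewrite muln_gt0.
Qed.

Lemma lapdelta_self d (x : pt d) : lap (delta x) x = -1.
Proof.
rewrite /lap /delta eqxx big1 => [|i _]; first ring.
rewrite (negbTE (shift_ne _ _ _)) // (negbTE (shift_ne _ _ _)) //; ring.
Qed.

Lemma delta_ge0 d (x z : pt d) : 0 <= delta x z.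
Proof. rewrite /delta; case: eqP => _; lra. Qed.

Lemma lapdelta_other d (x z : pt d) : z != x -> 0 <= lap (delta x) z.
Proof.
move=> hz; rewrite /lap {3}/delta (negbTE hz).
have := Rinv2d_ge0 d.
have : 0 <= \big[Rplus/R0]_(i < d) (delta x (shift z i 1%R) + delta x (shift z i (-1)%R)).
  by apply: sumR_ge0 => i; have := delta_ge0 x (shift z i 1%R); have := delta_ge0 x (shift z i (-1)%R); lra.
move=> h1 h2; have := Rmult_le_pos _ _ h2 h1; lra.
Qed.

Lemma topple_self d (x : pt d) mu : topple x mu x = mu x - alpha mu x.
Proof. rewrite /topple lapdelta_self; ring. Qed.

Lemma topple_other d (x z : pt d) mu : z != x -> mu z <= topple x mu z.
Proof.
move=> hz; rewrite /topple; have := lapdelta_other hz; have := alpha_ge0 mu x.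
move=> h1 h2; have := Rmult_le_pos _ _ h1 h2; lra.
Qed.

Lemma topple_nonneg d (x : pt d) mu : (forall z, 0 <= mu z) -> forall z, 0 <= topple x mu z.
Proof.
move=> h z; case: (eqVneq z x) => [->|hz].
  rewrite topple_self /alpha /Rmax; have := h x; case: Rle_dec => H1 H2; rl.
have := topple_other mu hz; have := h z; lra.
Qed.

Lemma mu_nonneg d (mu0 : pt d -> R) xs k : (forall z, 0 <= mu0 z) -> forall z, 0 <= mu_seq mu0 xs k z.
Proof. move=> h; elim: k => [|k IH] //=; exact: topple_nonneg. Qed.
Definition nbh d (x : pt d) : seq (pt d) :=
  x :: flatten [seq [:: shift x i 1%R; shift x i (-1)%R] | i <- enum 'I_d].

Lemma nbh_self d (x : pt d) : x \in nbh x.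
Proof. by rewrite in_cons eqxx. Qed.
Lemma nbh_p d (x : pt d) i : shift x i 1%R \in nbh x.
Proof. rewrite in_cons; apply/orP; right; apply/flatten_mapP; exists i; rewrite ?mem_enum //. by rewrite in_cons eqxx. Qed.
Lemma nbh_m d (x : pt d) i : shift x i (-1)%R \in nbh x.
Proof. rewrite in_cons; apply/orP; right; apply/flatten_mapP; exists i; rewrite ?mem_enum //. by rewrite !in_cons eqxx orbT. Qed.
Lemma nbh_inv d (x z : pt d) : z \in nbh x ->
  z = x \/ exists i s, (s = 1%R \/ s = (-1)%R) /\ z = shift x i s.
Proof.
rewrite in_cons => /orP [/eqP -> | /flatten_mapP [i _]]; first by left.
rewrite !in_cons orbF => /orP [] /eqP ->; right; exists i.
  by exists 1%R; split => //; left.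
by exists (-1)%R; split => //; right.
Qed.

Lemma lapdelta_out d (x z : pt d) : z \notin nbh x -> lap (delta x) z = 0.
Proof.
move=> hz; rewrite /lap {3}/delta.
have -> : (z == x) = false by apply/negbTE; apply: contra hz => /eqP ->; exact: nbh_self.
rewrite big1 => [|i _]; first by rewrite Rmult_0_r; rl.
rewrite !delta_shift /delta GRing.opprK.
have -> : (z == shift x i (-1)%R) = false by apply/negbTE; apply: contra hz => /eqP ->; exact: nbh_m.
have -> : (z == shift x i 1%R) = false by apply/negbTE; apply: contra hz => /eqP ->; exact: nbh_p.
rl.
Qed.

Definition Sk d (s0 : seq (pt d)) (xs : nat -> pt d) k :=
  undup (s0 ++ flatten [seq nbh (xs j) | j <- iota 0 k]).

Lemma Sk_uniq d (s0 : seq (pt d)) xs k : uniq (Sk s0 xs k).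
Proof. exact: undup_uniq. Qed.
Lemma Sk_s0 d (s0 : seq (pt d)) xs k z : z \in s0 -> z \in Sk s0 xs k.
Proof. by move=> h; rewrite mem_undup mem_cat h. Qed.
Lemma Sk_nbh d (s0 : seq (pt d)) xs k j z : (j < k)%N -> z \in nbh (xs j) -> z \in Sk s0 xs k.
Proof.
move=> hj hz; rewrite mem_undup mem_cat; apply/orP; right; apply/flatten_mapP.
by exists j => //; rewrite mem_iota.
Qed.
Lemma Sk_mono d (s0 : seq (pt d)) xs k z : z \in Sk s0 xs k -> z \in Sk s0 xs k.+1.
Proof.
move=> h0; rewrite mem_undup mem_cat; move: h0; rewrite mem_undup mem_cat.
move=> /orP [h|/flatten_mapP [j hj hz]]; first by rewrite h.
apply/orP; right; apply/flatten_mapP; exists j => //; move: hj; rewrite !mem_iota !add0n /= => hj.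
by rewrite ltnS ltnW.
Qed.
Lemma support d (mu0 : pt d -> R) xs s0 : (forall z, mu0 z <> 0 -> z \in s0) ->
  forall k z, mu_seq mu0 xs k z <> 0 -> z \in Sk s0 xs k.
Proof.
move=> h0; elim=> [|k IH] z /=; first by move/h0; exact: Sk_s0.
case: (boolP (z \in nbh (xs k))) => hz; first by move=> _; exact: (Sk_nbh _ (ltnSn k) hz).
rewrite /topple lapdelta_out // Rmult_0_r Rplus_0_r => hm; apply: Sk_mono; exact: IH.
Qed.

Lemma evol d (mu0 : pt d -> R) xs g k (T : seq (pt d)) : uniq T ->
  (forall j z, (j < k)%N -> z \in nbh (xs j) -> z \in T) ->
  \rsum_(z <- T) (mu_seq mu0 xs k z * g z) = \rsum_(z <- T) (mu0 z * g z) +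
  \rsum_(j <- iota 0 k) (alpha (mu_seq mu0 xs j) (xs j) * lap g (xs j)).
Proof.
move=> uT; elim: k => [|k IH] hT; first by rewrite big_nil Rplus_0_r.
rewrite -addn1 iotaD big_cat big_seq1 add0n /=.
rewrite -Rplus_assoc -IH; last by move=> j z hj hz; apply: hT hz; exact: leqW hj.
have hx : forall z, z \in nbh (xs k) -> z \in T by move=> z hz; apply: hT hz; exact: ltnSn.
rewrite -(sum_lapdelta g uT (hx _ (nbh_self _)) (fun i => hx _ (nbh_p _ i)) (fun i => hx _ (nbh_m _ i))).
rewrite -sumRM -sumRD; apply: sumR_ext => z; rewrite addn1 /= /topple; ring.
Qed.
Lemma u_step d (mu0 : pt d -> R) xs k y :
  u_seq mu0 xs k.+1 y = u_seq mu0 xs k y + alpha (mu_seq mu0 xs k) (xs k) * delta (xs k) y.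
Proof. rewrite /= /delta; case: eqP => [->|_]; ring. Qed.

Lemma u_ge0 d (mu0 : pt d -> R) xs k y : 0 <= u_seq mu0 xs k y.
Proof.
elim: k => [|k IH]; first by rewrite /=; rl.
rewrite u_step; have := alpha_ge0 (mu_seq mu0 xs k) (xs k); have := delta_ge0 (xs k) y.
move=> h1 h2; have := Rmult_le_pos _ _ h2 h1; lra.
Qed.

Lemma u_grow d (mu0 : pt d -> R) xs k y : u_seq mu0 xs k y <= u_seq mu0 xs k.+1 y.
Proof.
rewrite u_step; have := alpha_ge0 (mu_seq mu0 xs k) (xs k); have := delta_ge0 (xs k) y.
move=> h1 h2; have := Rmult_le_pos _ _ h2 h1; lra.
Qed.

Lemma u_le_sum d (mu0 : pt d -> R) xs k y :
  u_seq mu0 xs k y <= \rsum_(j <- iota 0 k) alpha (mu_seq mu0 xs j) (xs j).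
Proof.
elim: k => [|k IH]; first by rewrite big_nil /=; rl.
rewrite u_step -addn1 iotaD big_cat big_seq1 add0n.
have := alpha_ge0 (mu_seq mu0 xs k) (xs k).
rewrite /delta /=; case: eqP => _ h; rl.
Qed.

Lemma mu_id d (mu0 : pt d -> R) xs k y : mu_seq mu0 xs k y = mu0 y + lap (u_seq mu0 xs k) y.
Proof.
elim: k y => [|k IH] y.
  rewrite /= (lap_ext (g := fun _ => 0)) // /lap big1 => [|i _]; rl.
rewrite (lap_ext (g := fun z => u_seq mu0 xs k z + alpha (mu_seq mu0 xs k) (xs k) * delta (xs k) z)).
  by rewrite lap_lin /= /topple IH; ring.
exact: u_step.
Qed.
Definition N d (z : pt d) : nat := (\sum_(i < d) `|z i|)%N.

Lemma abs_step (a s : int) : `|s|%N = 1%N -> (`|a| <= `|(a + s)%R| + 1)%N.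
Proof.
move=> hs; have := leqD_dist a (a + s)%R 0%R.
rewrite !GRing.subr0 GRing.opprD GRing.addrA GRing.subrr GRing.add0r abszN hs addnC //.
Qed.

Lemma N_nbr d (z : pt d) i s : `|s|%N = 1%N -> (N z <= N (shift z i s) + 1)%N.
Proof.
move=> hs; rewrite /N (bigD1 i) //= [X in (_ <= X + _)%N](bigD1 i) //= shiftE eqxx.
have -> : (\sum_(j < d | j != i) `|shift z i s j|)%N = (\sum_(j < d | j != i) `|z j|)%N.
  by apply: eq_bigr => j hj; rewrite shiftE (negbTE hj).
rewrite -addnA [(_ + 1)%N]addnC addnA leq_add2r; exact: abs_step.
Qed.

Lemma nbh_N d (x z : pt d) : z \in nbh x -> (N z <= N x + 1)%N.
Proof.
move/nbh_inv => [->|[i [s [hs ->]]]]; first exact: leq_addr.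
have h := @N_nbr d (shift x i s) i (- s)%R; rewrite shiftK in h; apply: h.
by rewrite abszN; case: hs => ->.
Qed.

Lemma coord_le_N d (z : pt d) i : (`|z i| <= N z)%N.
Proof. by rewrite /N (bigD1 i) //= leq_addr. Qed.
Lemma leq_bigmax_seq (T : eqType) (r : seq T) (F : T -> nat) x :
  x \in r -> (F x <= \max_(i <- r) F i)%N.
Proof.
elim: r => [|a r IH] //; rewrite in_cons big_cons leq_max => /orP [/eqP ->|h].
  by rewrite leqnn.
by rewrite IH ?orbT.
Qed.

Lemma inv1 d (mu0 : pt d -> R) xs (s0 : seq (pt d)) : (forall z, mu0 z <> 0 -> z \in s0) ->
  forall k z, mu_seq mu0 xs k z <> 0 ->
  z \in s0 \/ exists z', 0 < u_seq mu0 xs k z' /\ z \in nbh z'.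
Proof.
move=> h0; elim=> [|k IH] z; first by move/h0; left.
rewrite [mu_seq _ _ k.+1 z]/=.
case: (Req_dec (mu_seq mu0 xs k z) 0) => hm.
  rewrite /topple hm Rplus_0_l => hne.
  have ha : alpha (mu_seq mu0 xs k) (xs k) <> 0 by move=> e; apply: hne; rewrite e; ring.
  have hl : lap (delta (xs k)) z <> 0 by move=> e; apply: hne; rewrite e; ring.
  right; exists (xs k); split.
    rewrite u_step /delta eqxx; have := u_ge0 mu0 xs k (xs k); have := alpha_ge0 (mu_seq mu0 xs k) (xs k).
    move=> h1 h2; rl.
  by apply/negPn/negP => hz; apply: hl; exact: lapdelta_out.
move=> _; case: (IH z hm) => [->|[z' [hz' hn]]]; first by left.
right; exists z'; split => //; have := u_grow mu0 xs k z'; lra.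
Qed.

Lemma inv2 d (mu0 : pt d -> R) xs k z : 0 < u_seq mu0 xs k z -> 1 <= mu_seq mu0 xs k z.
Proof.
elim: k z => [|k IH] z; first by rewrite /=; rl.
case: (eqVneq z (xs k)) => [->|hz].
  rewrite u_step /= topple_self /delta eqxx /alpha /Rmax; case: Rle_dec => h1 h2; last by rl.
  have : 0 < u_seq mu0 xs k (xs k) by move: h2; rewrite Rmult_0_l; rl.
  move/IH; rl.
rewrite u_step /delta (negbTE hz) Rmult_0_r Rplus_0_r /= => /IH h.
have := topple_other (mu_seq mu0 xs k) hz; lra.
Qed.
Lemma inv3 d (mu0 : pt d -> R) xs (s0 : seq (pt d)) : (forall z, mu0 z <> 0 -> z \in s0) ->
  forall k z, 0 < u_seq mu0 xs k z -> forall r, (\max_(w <- s0) N w < r)%N -> (r <= N z)%N ->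
  exists z', 0 < u_seq mu0 xs k z' /\ N z' = r.
Proof.
move=> h0; elim=> [|k IH] z; first by rewrite /=; rl.
move=> hu r hr hrz.
have lift : forall z', 0 < u_seq mu0 xs k z' -> 0 < u_seq mu0 xs k.+1 z'.
  by move=> z' h; have := u_grow mu0 xs k z'; lra.
case: (Rlt_le_dec 0 (u_seq mu0 xs k z)) => hk.
  by case: (IH z hk r hr hrz) => z' [h1 h2]; exists z'; split => //; apply: lift.
have hz : z = xs k.
  move: hu; rewrite u_step /delta; case: eqP => // _; have := u_ge0 mu0 xs k z; rl.
case: (eqVneq r (N z)) => [->|hne]; first by exists z.
have hlt : (r < N z)%N by rewrite ltn_neqAle hne hrz.
have ha : 0 < alpha (mu_seq mu0 xs k) (xs k).
  move: hu; rewrite u_step /delta -hz eqxx; have := u_ge0 mu0 xs k z; rl.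
have hm : mu_seq mu0 xs k z <> 0.
  move: ha; rewrite /alpha /Rmax -hz; case: Rle_dec => h1 h2; rl.
case: (inv1 (xs:=xs) h0 hm) => [hs|[z'' [hu'' hn]]].
  have := leq_bigmax_seq (@N d) hs => h; have := leq_ltn_trans h (ltn_trans hr hlt); by rewrite ltnn.
have := nbh_N hn => h; have hr' : (r <= N z'')%N.
  by rewrite -ltnS -[(N z'').+1]addn1; exact: leq_trans hlt h.
by case: (IH z'' hu'' r hr hr') => z' [h1 h2]; exists z'; split => //; apply: lift.
Qed.
Lemma sum_ge_pt d (T : seq (pt d)) (f : pt d -> R) z : uniq T -> z \in T ->
  (forall w, 0 <= f w) -> f z <= \rsum_(w <- T) f w.
Proof.
move=> uT zT h; rewrite (bigD1_seq z) //=.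
have : 0 <= \big[Rplus/R0]_(i <- T | i != z) f i.
  rewrite big_mkcond /=; apply: sumR_ge0 => w; case: (w != z) => //; rl.
move=> H; rewrite -{1}(Rplus_0_r (f z)); apply: Rplus_le_compat_l; exact: H.
Qed.

Lemma shell_count d (T : seq (pt d)) (f : pt d -> R) a L : uniq T -> (forall z, 0 <= f z) ->
  (forall r, (a <= r < a + L)%N -> exists z, z \in T /\ N z = r /\ 1 <= f z) ->
  INR L <= \rsum_(z <- T) f z.
Proof.
move=> uT hf.
suff : forall L, (forall r, (a <= r < a + L)%N -> exists z, z \in T /\ N z = r /\ 1 <= f z) ->
  INR L <= \rsum_(z <- T) (if (a <= N z < a + L)%N then f z else 0).
  move=> H hL; apply: Rle_trans (H L hL) _; apply: sumR_le => z.
  case: ifP => _; [lra | exact: hf].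
elim=> [|l IH] hl.
  apply: sumR_ge0 => z; case: ifP => _ //; rl.
have -> : \rsum_(z <- T) (if (a <= N z < a + l.+1)%N then f z else 0) =
  \rsum_(z <- T) (if (a <= N z < a + l)%N then f z else 0) +
  \rsum_(z <- T) (if (N z == a + l)%N then f z else 0).
  rewrite -sumRD; apply: sumR_ext => z.
  case: (eqVneq (N z) (a + l)%N) => [->|hne].
    rewrite addnS ltnS leqnn ltnn leq_addr /=; ring.
  rewrite addnS ltnS (leq_eqVlt (N z)) (negbTE hne) /=.
  by case: (_ && _); ring.
have h1 : INR l <= \rsum_(z <- T) (if (a <= N z < a + l)%N then f z else 0).
  by apply: IH => r /andP [h1 h2]; apply: hl; rewrite h1 /= addnS ltnS ltnW.
have [z [zT [hz hz1]]] : exists z, z \in T /\ N z = (a + l)%N /\ 1 <= f z.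
  by apply: hl; rewrite leq_addr /= addnS ltnS leqnn.
have h2 : 1 <= \rsum_(w <- T) (if (N w == a + l)%N then f w else 0).
  apply: Rle_trans hz1 _.
  have := @sum_ge_pt d T (fun w => if (N w == a + l)%N then f w else 0) z uT zT.
  rewrite /= hz eqxx; apply => w; case: ifP => _ //; rl.
rewrite S_INR; lra.
Qed.
Lemma Q_ge0 d (z : pt d) : 0 <= Q z.
Proof. apply: sumR_ge0 => i; exact: (Rle_0_sqr _). Qed.

Lemma Q_le d (z : pt d) : Q z <= INR d * (INR (N z) * INR (N z)).
Proof.
rewrite /Q -iter_plus -big_const_ord; apply: sumR_le => i.
rewrite zR_sq; have h : INR `|z i| <= INR (N z) by apply: le_INR; apply/leP; exact: coord_le_N.
have h0 := pos_INR `|z i|; nra.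
Qed.

Lemma supp_change d (T s0 : seq (pt d)) (f : pt d -> R) : uniq T ->
  (forall z, f z <> 0 -> z \in s0) -> (forall z, z \in s0 -> z \in T) ->
  \rsum_(z <- T) f z = \rsum_(z <- undup s0) f z.
Proof.
move=> uT hf hT; rewrite (bigID (fun z => z \in s0)) /=.
rewrite [X in _ + X]big1 => [|z /= hz]; last first.
  by case: (Req_dec (f z) 0) => // /hf h; rewrite h in hz.
rewrite Rplus_0_r -big_filter; apply: perm_big; apply: uniq_perm.
- exact: filter_uniq.
- exact: undup_uniq.
- by move=> z; rewrite mem_filter mem_undup; case: (boolP (z \in s0)) => // /hT ->.
Qed.
Lemma u_bounded d (hd : (0 < d)%N) (mu0 : pt d -> R) (s0 : seq (pt d)) xs :
  (forall y, 0 <= mu0 y) -> (forall z, mu0 z <> 0 -> z \in s0) ->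
  exists B, forall k y, u_seq mu0 xs k y <= B.
Proof.
move=> hnn h0.
set M := \rsum_(z <- undup s0) mu0 z.
have hT : forall k j z, (j < k)%N -> z \in nbh (xs j) -> z \in Sk s0 xs k.
  by move=> k j z; apply: Sk_nbh.
have mass : forall k, \rsum_(z <- Sk s0 xs k) mu_seq mu0 xs k z = M.
  move=> k; have := evol mu0 (fun _ => 1) (Sk_uniq s0 xs k) (hT k).
  under eq_bigr => z _ do rewrite Rmult_1_r.
  under [X in _ = X + _]eq_bigr => z _ do rewrite Rmult_1_r.
  under [X in _ = _ + X]eq_bigr => j _ do rewrite lap_const // Rmult_0_r.
  rewrite [\rsum_(j <- iota 0 k) _]big1 // Rplus_0_r => ->.
  apply: supp_change; [exact: Sk_uniq | exact: h0 | move=> z; exact: Sk_s0].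
set R0n := (\max_(w <- s0) N w)%N.
have [n hn] : exists n : nat, INR n * 1 > M by apply: INR_archimed; rl.
have top : forall k z, 0 < u_seq mu0 xs k z -> (N z <= R0n + n)%N.
  move=> k z hz; rewrite leqNgt; apply/negP => hlt.
  have : INR n <= \rsum_(w <- Sk s0 xs k) mu_seq mu0 xs k w.
    apply: (@shell_count d _ _ R0n.+1) => //; first exact: Sk_uniq.
      exact: mu_nonneg xs k hnn.
    move=> r /andP [h1 h2].
    have hrz : (r <= N z)%N by apply: leq_trans _ (ltnW hlt); rewrite -ltnS -addSn.
    have [z' [hu' hN']] := inv3 h0 hz h1 hrz.
    have hm := inv2 hu'.
    exists z'; split; last by split.
    apply: (support h0) => e; rewrite e in hm; rl.
  rewrite mass; lra.
have supp : forall k z, mu_seq mu0 xs k z <> 0 -> (N z <= R0n + n + 1)%N.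
  move=> k z hm; case: (inv1 h0 hm) => [hs|[z' [hu hnb]]].
    apply: leq_trans (leq_bigmax_seq (@N d) hs) _; rewrite -addnA; exact: leq_addr.
  apply: leq_trans (nbh_N hnb) _; rewrite leq_add2r; exact: top k z' hu.
set Nb := (R0n + n + 1)%N.
set Qb := INR d * (INR Nb * INR Nb).
exists (Qb * M) => k y.
apply: Rle_trans (u_le_sum mu0 xs k y) _.
have := evol mu0 (@Q d) (Sk_uniq s0 xs k) (hT k).
under [X in _ = _ + X]eq_bigr => j _ do rewrite lap_Q // Rmult_1_r.
move=> hE.
have hQ0 : 0 <= \rsum_(z <- Sk s0 xs k) (mu0 z * Q z).
  by apply: sumR_ge0 => z; apply: Rmult_le_pos; [exact: hnn | exact: Q_ge0].
have hle : \rsum_(z <- Sk s0 xs k) (mu_seq mu0 xs k z * Q z) <= Qb * M.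
  rewrite -(mass k) -sumRM; apply: sumR_le => z.
  case: (Req_dec (mu_seq mu0 xs k z) 0) => [->|hm]; first by rewrite Rmult_0_l Rmult_0_r; lra.
  have hQ : Q z <= Qb.
    apply: Rle_trans (Q_le z) _.
    have h1 : INR (N z) <= INR Nb by apply: le_INR; apply/leP; exact: supp k z hm.
    have h2 := pos_INR (N z); have h3 := pos_INR d; rewrite /Qb; apply: Rmult_le_compat_l => //; exact: Rmult_le_compat.
  have := mu_nonneg xs k hnn z; nra.
apply: Rle_trans _ hle; rewrite hE -{1}[\rsum_(j <- iota 0 k) _]Rplus_0_l; apply: Rplus_le_compat_r; exact: hQ0.
Qed.

Lemma cv_const c : Un_cv (fun _ : nat => c) c.
Proof. move=> eps he; exists O => n _; rewrite R_dist_eq; lra. Qed.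

Lemma cv_ext (u v : nat -> R) l : (forall k, u k = v k) -> Un_cv u l -> Un_cv v l.
Proof. move=> h hu eps he; case: (hu eps he) => N hN; exists N => n hn; rewrite -h; exact: hN. Qed.

Lemma cv_sum (I : Type) (r : seq I) (F : nat -> I -> R) (l : I -> R) :
  (forall i, Un_cv (fun k => F k i) (l i)) ->
  Un_cv (fun k => \rsum_(i <- r) F k i) (\rsum_(i <- r) l i).
Proof.
move=> h; elim: r => [|a r IH].
  rewrite big_nil; apply: cv_ext (cv_const _) => k; by rewrite big_nil.
rewrite big_cons; apply: cv_ext (CV_plus _ _ _ _ (h a) IH) => k; by rewrite big_cons.
Qed.

Lemma cv_lap d (f : nat -> pt d -> R) (g : pt d -> R) x :
  (forall z, Un_cv (fun k => f k z) (g z)) -> Un_cv (fun k => lap (f k) x) (lap g x).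
Proof.
move=> h; rewrite /lap; apply: CV_minus => //; apply: CV_mult; first exact: cv_const.
apply: (@cv_sum _ _ (fun k i => f k (shift x i 1%R) + f k (shift x i (-1)%R)) (fun i => g (shift x i 1%R) + g (shift x i (-1)%R))) => i.
exact: CV_plus.
Qed.

Lemma lim_le1 (v : nat -> R) L : Un_cv v L -> (forall N, exists k, (N <= k)%N /\ v k <= 1) -> L <= 1.
Proof.
move=> hv hk; apply: Rnot_lt_le => hL.
have [N hN] := hv (L - 1) ltac:(lra).
have [k [hk1 hk2]] := hk N.
have := hN k ltac:(apply/leP; exact: hk1).
rewrite /R_dist => habs; have := Rle_abs (L - v k); rewrite Rabs_minus_sym; lra.
Qed.
Close Scope R_scope.

Theorem lemma3p1 (d : nat) (hd : (0 < d)%N) (mu0 : pt d -> R)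
  (hnn : forall y, Rle R0 (mu0 y))
  (hfin : exists s : seq (pt d), forall y, mu0 y <> R0 -> y \in s)
  (xs : nat -> pt d)
  (hinf : forall (x : pt d) (N : nat), exists k, (N <= k)%N /\ xs k = x) :
  exists u : pt d -> R,
    (forall y, Un_growing (fun k => u_seq mu0 xs k y)) /\
    (forall y, Un_cv (fun k => u_seq mu0 xs k y) (u y)) /\
    (forall y, Un_cv (fun k => mu_seq mu0 xs k y) (Rplus (mu0 y) (lap u y))) /\
    (forall y, Rle (Rplus (mu0 y) (lap u y)) R1).
Proof.
have [s0 h0] := hfin.
have [B hB] := u_bounded hd xs hnn h0.
have grow : forall y, Un_growing (fun k => u_seq mu0 xs k y) by move=> y k; exact: u_grow.
have ub : forall y, has_ub (fun k => u_seq mu0 xs k y).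
  by move=> y; exists B => _ [k ->]; exact: hB.
pose u y := proj1_sig (growing_cv _ (grow y) (ub y)).
have cvu : forall y, Un_cv (fun k => u_seq mu0 xs k y) (u y).
  by move=> y; rewrite /u; case: growing_cv.
have cvmu : forall y, Un_cv (fun k => mu_seq mu0 xs k y) (Rplus (mu0 y) (lap u y)).
  move=> y; apply: cv_ext (CV_plus _ _ _ _ (cv_const (mu0 y)) (cv_lap y cvu)) => k.
  by rewrite mu_id.
exists u; split => //; split => //; split => // y.
apply: lim_le1 (cvmu y) _ => n.
have [k [hk hx]] := hinf y n.
exists k.+1; split; first exact: leqW.
rewrite /= -hx topple_self /alpha /Rmax; case: Rle_dec => h; rl.
Qed.
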